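(* Let $H$ be a real Hilbert space of infinite dimension and let $Q$ be a complete $\sigma$-finite probability measure on $H$ such that $Q(A)=0$ for every finite dimensional affine subspace $A$ of $H$. Then for every integer $k \geq 1$ and every finite dimensional affine subspace $A$ of $H^k$, we have $Q^{\otimes k}(A)=0$.
   Context: $Q^{\otimes k}$ denotes the $k$-fold product measure of $Q$ on $H^k$. An affine subspace of a vector space is a set of the form $a + V$ with $V$ a vector subspace; it is finite dimensional if $V$ is. *)

(* Defs.v *)
From HB Require Import structures.
From mathcomp Require Import all_boot all_order all_algebra.
From mathcomp Require Import all_classical all_reals all_analysis.
Set Implicit Arguments. Unset Strict Implicit. Unset Printing Implicit Defensive.
Import Order.TTheory GRing.Theory Num.Theory.
Local Open Scope classical_set_scope.
Local Open Scope ring_scope.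

Section defs.
Variable R : realType.

Definition fd_affine (V : lmodType R) (A : set V) : Prop :=
  exists (a : V) (n : nat) (v : 'I_n -> V),
    A = [set a + \sum_(i < n) c i *: v i | c in [set: 'I_n -> R]].

Definition lin_indep (V : lmodType R) (n : nat) (v : 'I_n -> V) : Prop :=
  forall c : 'I_n -> R, \sum_(i < n) c i *: v i = 0 -> forall i, c i = 0.

Definition infinite_dim (V : lmodType R) : Prop :=
  forall n : nat, exists v : 'I_n -> V, lin_indep v.

Section inner.
Variables (V : lmodType R) (inner : V -> V -> R).

Definition ip_norm (x : V) : R := Num.sqrt (inner x x).

Definition is_hilbert : Prop :=
  [/\ (forall x y, inner x y = inner y x),
      (forall a x y z, inner (a *: x + y) z = a * inner x z + inner y z),
      (forall x, 0 <= inner x x),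
      (forall x, inner x x = 0 -> x = 0) &
      (forall u : nat -> V,
         (forall e : R, 0 < e -> exists N, forall m n, (N <= m)%N -> (N <= n)%N ->
            ip_norm (u m - u n) < e) ->
         exists l : V, forall e : R, 0 < e -> exists N, forall n, (N <= n)%N ->
            ip_norm (u n - l) < e)].

Definition ip_open (U : set V) : Prop :=
  forall x, U x -> exists2 e : R, 0 < e & forall y, ip_norm (y - x) < e -> U y.
End inner.

(* The measurable space (V, M) for a real vector space V and a family M of
   subsets of V (used with M a sigma-algebra, so that the measurable sets of
   meas_space M are exactly the members of M, as <<s M>> = M). *)
Definition lmod_ptd (V : lmodType R) : Type := V.
HB.instance Definition _ (V : lmodType R) := Choice.on (lmod_ptd V).
HB.instance Definition _ (V : lmodType R) := isPointed.Build (lmod_ptd V) 0.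
Definition meas_space (V : lmodType R) (M : set (set V)) :=
  g_sigma_algebraType (M : set (set (lmod_ptd V))).

(* The k-fold product H^k is k.-tuple H with the product sigma-algebra
   (mathcomp-analysis' instance on tuples).  P is the product measure
   Q^{(x)k} iff it takes the product value on measurable rectangles
   (this determines P uniquely since Q is sigma-finite). *)
Definition is_product_measure d (H : measurableType d) (k : nat)
    (Q : set H -> \bar R) (P : set (k.-tuple H) -> \bar R) : Prop :=
  forall B : 'I_k -> set H, (forall i, measurable (B i)) ->
    P [set t | forall i, B i (tnth t i)] = (\prod_(i < k) Q (B i))%E.

(* identification of a tuple with the corresponding element of the
   vector space {ffun 'I_k -> H} = H^k *)
Definition tuple_vec (T : Type) (k : nat) (t : k.-tuple T) : {ffun 'I_k -> T} :=
  [ffun i => tnth t i].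
End defs.

(* Main.v *)
Require Import Defs.
From HB Require Import structures.
From mathcomp Require Import all_boot all_order all_algebra.
From mathcomp Require Import all_classical all_reals all_analysis.
Import Order.TTheory GRing.Theory Num.Theory.
Local Open Scope classical_set_scope.
Local Open Scope ring_scope.

Theorem mainTheorem2 (R : realType) (H : lmodType R)
    (inner : H -> H -> R)
    (Hhilb : is_hilbert inner)
    (Hinf : infinite_dim H)
    (M : set (set H))
    (HM : sigma_algebra setT M)
    (Hborel : forall U : set H, ip_open inner U -> M U)
    (Q : probability (meas_space M) R)
    (Qcompl : measure_is_complete Q)
    (Qsfin : sigma_finite setT Q)
    (Qaff : forall A : set H, fd_affine A -> M A /\ Q A = 0%E)
    (k : nat) (hk : (1 <= k)%N)
    (P : {measure set (k.-tuple (meas_space M)) -> \bar R})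
    (HP : is_product_measure Q P)
    (A : set {ffun 'I_k -> H}) (HA : fd_affine A) :
  P.-negligible (@tuple_vec H k @^-1` A).
Proof.
have [a [n [v ->]]] := HA.
pose B : 'I_k -> set (meas_space M) :=
  fun i => [set a i + \sum_(j < n) c j *: v j i | c in [set: 'I_n -> R]].
have fdB : forall i, fd_affine (B i : set H).
  by move=> i; exists (a i), n, (fun j => v j i).
have mB : forall i, measurable (B i).
  move=> i; apply: sub_gen_smallest; exact: (Qaff _ (fdB i)).1.
exists [set t | forall i, B i (tnth t i)]; split.
- have -> : [set t : k.-tuple (meas_space M) | forall i, B i (tnth t i)] =
     \bigcap_(i in [set: 'I_k]) ((tnth (T:=meas_space M))^~ i @^-1` B i).
    by apply/seteqP; split => t /= Ht i; [move=> _|]; apply: Ht.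
  apply: fin_bigcap_measurable; first exact: finite_finset.
  move=> i _; rewrite -[X in measurable X]setTI.
  exact: (measurable_tnth i measurableT (mB i)).
- rewrite HP //.
  rewrite (bigD1 (Ordinal hk)) //=.
  by rewrite (Qaff _ (fdB _)).2 mul0e.
- move=> t /= [c _ Hc] i; exists c => //.
  have := congr1 (fun f : {ffun 'I_k -> H} => f i) Hc; rewrite /tuple_vec !ffunE => <-.
  by rewrite sum_ffunE; congr (_ + _); apply: eq_bigr => j _; rewrite ffunE.
Qed.
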